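(* Let $\mathcal F$ be a proper filter on $\omega$. The game $\mathfrak G(\mathcal F^+,[\omega]^{<\omega},\mathcal F^c)$ is dual to the game $\mathfrak G(\mathcal F,\omega,\mathcal F)$ (a player has a winning strategy in one iff the other player has one in the other). Consequently, in $\mathfrak G(\mathcal F^+,[\omega]^{<\omega},\mathcal F^c)$, player I never has a winning strategy, and player II has a winning strategy if and only if $\mathcal F$ is not Ramsey.
   Context: A filter on $\omega$ is a family $\mathcal F\subseteq\mathcal P(\omega)$ closed under finite intersections and supersets and containing all cofinite sets; it is proper if all its members are infinite. $\mathcal F^+=\{X:\omega\setminus X\notin\mathcal F\}$, $\mathcal F^c=\mathcal P(\omega)\setminus\mathcal F$. Game $\mathfrak G(\mathcal X,\omega,\mathcal Z)$: at each stage $k$, I chooses $X_k\in\mathcal X$ and II responds with $n_k\in X_k$; II wins if $\{n_k:k\in\omega\}\in\mathcal Z$. Game $\mathfrak G(\mathcal X,[\omega]^{<\omega},\mathcal Z)$: at each stage $k$, I chooses $X_k\in\mathcal X$ and II responds with a nonempty finite $s_k\subseteq X_k$; II wins if $\bigcup_k s_k\in\mathcal Z$. In each game I wins when II does not. A tree is a set $T$ of finite sequences of natural numbers containing the empty sequence and closed under initial segments; it is an $\mathcal F$-tree if for each $\bar s\in T$ there is $X_{\bar s}\in\mathcal F$ with $\bar s^\frown n\in T$ for all $n\in X_{\bar s}$; a branch (infinite sequence with all initial segments in $T$) is in $\mathcal F$ if its set of values is in $\mathcal F$. $\mathcal F$ is Ramsey if every $\mathcal F$-tree has a branch in $\mathcal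 F$. *)

(* Defs.v *)
From Stdlib Require Import List Arith.
Import ListNotations.

Definition setN := nat -> Prop.
Definition family := setN -> Prop.

Definition subsetN (A B : setN) : Prop := forall n, A n -> B n.
Definition cofinite (A : setN) : Prop := exists m, forall n, m <= n -> A n.
Definition infinite (A : setN) : Prop := forall m, exists n, m <= n /\ A n.
Definition complN (A : setN) : setN := fun n => ~ A n.

Definition is_filter (F : family) : Prop :=
  (forall A B, F A -> F B -> F (fun n => A n /\ B n)) /\
  (forall A B, F A -> subsetN A B -> F B) /\
  (forall A, cofinite A -> F A).

Definition proper_filter (F : family) : Prop :=
  is_filter F /\ forall A, F A -> infinite A.

Definition Fplus (F : family) : family := fun X => ~ F (complN X).
Definition Fcompl (F : family) : family := fun X => ~ F X.

Definition prefix {T : Type} (f : nat -> T) (k : nat) : list T := map f (seq 0 k).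

(* Strategy of I: from II's previous moves n_0..n_{k-1} to I's move X_k. *)
Definition stratI_nat := list nat -> setN.
(* Strategy of II: from I's moves X_0..X_k to II's response n_k. *)
Definition stratII_nat := list setN -> nat.

Definition I_wins_nat (X Z : family) : Prop :=
  exists sigma : stratI_nat,
    (forall h, X (sigma h)) /\
    forall n : nat -> nat,
      (forall k, sigma (prefix n k) (n k)) ->
      ~ Z (fun m => exists k, n k = m).

Definition II_wins_nat (X Z : family) : Prop :=
  exists tau : stratII_nat,
    forall Xs : nat -> setN, (forall k, X (Xs k)) ->
      (forall k, Xs k (tau (prefix Xs (S k)))) /\
      Z (fun m => exists k, tau (prefix Xs (S k)) = m).

(* finite sets are represented by lists of naturals *)
Definition stratI_fin := list (list nat) -> setN.
Definition stratII_fin := list setN -> list nat.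

Definition I_wins_fin (X Z : family) : Prop :=
  exists sigma : stratI_fin,
    (forall h, X (sigma h)) /\
    forall s : nat -> list nat,
      (forall k, s k <> [] /\ forall x, In x (s k) -> sigma (prefix s k) x) ->
      ~ Z (fun m => exists k, In m (s k)).

Definition II_wins_fin (X Z : family) : Prop :=
  exists tau : stratII_fin,
    forall Xs : nat -> setN, (forall k, X (Xs k)) ->
      (forall k, tau (prefix Xs (S k)) <> [] /\
                 forall x, In x (tau (prefix Xs (S k))) -> Xs k x) /\
      Z (fun m => exists k, In m (tau (prefix Xs (S k)))).

Definition is_tree (T : list nat -> Prop) : Prop :=
  T [] /\ forall s t, T (s ++ t) -> T s.

Definition is_F_tree (F : family) (T : list nat -> Prop) : Prop :=
  is_tree T /\
  forall s, T s -> exists Xs, F Xs /\ forall n, Xs n -> T (s ++ [n]).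

Definition is_branch (T : list nat -> Prop) (b : nat -> nat) : Prop :=
  forall k, T (prefix b k).

Definition branch_in (F : family) (b : nat -> nat) : Prop :=
  F (fun m => exists k, b k = m).

Definition Ramsey (F : family) : Prop :=
  forall T, is_F_tree F T -> exists b, is_branch T b /\ branch_in F b.

(* Main.v *)
Require Import Defs.
From Stdlib Require Import List Arith Lia Classical ClassicalEpsilon.
Import ListNotations.

Lemma prefix_S {T} (f : nat -> T) k : prefix f (S k) = prefix f k ++ [f k].
Proof. unfold prefix. rewrite seq_S, map_app. reflexivity. Qed.

Lemma prefix_length {T} (f : nat -> T) k : length (prefix f k) = k.
Proof. unfold prefix. rewrite length_map, length_seq. reflexivity. Qed.

Lemma prefix_nth {T} (l : list T) d :
  prefix (fun k => nth k l d) (length l) = l.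
Proof.
  induction l as [|x l IH] using rev_ind; [reflexivity|].
  rewrite length_app. simpl. rewrite Nat.add_1_r, prefix_S, nth_middle.
  f_equal. rewrite <- IH at 2. unfold prefix. apply map_ext_in.
  intros k Hk. apply in_seq in Hk. apply app_nth1. lia.
Qed.

Lemma firstn_snoc {T} (l : list T) x : firstn (length l) (l ++ [x]) = l.
Proof. rewrite firstn_app, Nat.sub_diag, firstn_all. simpl. apply app_nil_r. Qed.


Lemma F_empty_false F (HF : proper_filter F) : ~ F (fun _ => False).
Proof. intros H. destruct HF as [_ Hinf]. destruct (Hinf _ H 0) as [n [_ []]]. Qed.

Lemma Fplus_full F (HF : proper_filter F) : Fplus F (fun _ => True).
Proof.
  unfold Fplus, complN. intro H. apply (F_empty_false F HF).
  destruct HF as [[_ [Hsup _]] _]. eapply Hsup; [exact H|]. intros n Hn. apply Hn; exact I.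
Qed.

Lemma F_full F (HF : proper_filter F) : F (fun _ => True).
Proof. destruct HF as [[_ [_ Hcof]] _]. apply Hcof. exists 0. auto. Qed.

Lemma Fplus_meets F (HF : proper_filter F) Y S : Fplus F Y -> F S -> exists x, Y x /\ S x.
Proof.
  intros HY HS. apply NNPP. intro Hn. apply HY.
  destruct HF as [[_ [Hsup _]] _]. eapply Hsup; [exact HS|]. intros n Hn' HYn. apply Hn. eauto.
Qed.

Lemma Fplus_unbounded F (HF : proper_filter F) Y M : Fplus F Y -> exists x, M <= x /\ Y x.
Proof.
  intros HY. apply NNPP. intro Hn. apply HY.
  destruct HF as [[_ [_ Hcof]] _]. apply Hcof. exists M. intros n Hn' HYn. apply Hn. eauto.
Qed.

Lemma F_inter_nonempty F (HF : proper_filter F) A B : F A -> F B -> exists m, A m /\ B m.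
Proof.
  intros HA HB. destruct HF as [[Hint _] Hinf].
  destruct (Hinf _ (Hint _ _ HA HB) 0) as [m [_ Hm]]. eauto.
Qed.

Lemma interleave_disj (M a b : nat -> nat) :
  (forall k, M k <= a k) -> (forall k, S (a k) <= b k) -> (forall k, M (S k) = S (b k)) ->
  forall i j, a i <> b j.
Proof.
  intros Ha Hb HM.
  assert (Hmono : forall i d, b i < M (S i + d)).
  { intros i d. induction d as [|d IH].
    - rewrite Nat.add_0_r, HM. lia.
    - rewrite Nat.add_succ_r, HM. pose proof (Ha (S i + d)). pose proof (Hb (S i + d)). lia. }
  intros i j E.
  destruct (lt_eq_lt_dec i j) as [[Hij|Hij]|Hij].
  - pose proof (Hmono i (j - S i)) as H1. replace (S i + (j - S i)) with j in H1 by lia.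
    pose proof (Ha j); pose proof (Hb i); pose proof (Hb j). lia.
  - subst. pose proof (Hb j). lia.
  - pose proof (Hmono j (i - S j)) as H1. replace (S j + (i - S j)) with i in H1 by lia.
    pose proof (Ha i). lia.
Qed.

Definition geq (m : nat) : setN := fun n => m <= n.

Definition stepN (tau : stratII_nat) (st : list setN * list setN * nat) :=
  match st with (l1, l2, M) =>
   (l1 ++ [geq M], l2 ++ [geq (S (tau (l1 ++ [geq M])))],
    S (tau (l2 ++ [geq (S (tau (l1 ++ [geq M])))]))) end.
Definition stN tau k := Nat.iter k (stepN tau) ([], [], 0).
Definition MN tau k := snd (stN tau k).
Definition l1N tau k := fst (fst (stN tau k)).
Definition l2N tau k := snd (fst (stN tau k)).
Definition aN tau k := tau (l1N tau k ++ [geq (MN tau k)]).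
Definition bN tau k := tau (l2N tau k ++ [geq (S (aN tau k))]).

Lemma stN_eqs tau k :
  MN tau (S k) = S (bN tau k) /\
  l1N tau (S k) = l1N tau k ++ [geq (MN tau k)] /\
  l2N tau (S k) = l2N tau k ++ [geq (S (aN tau k))].
Proof.
  unfold MN, l1N, l2N, bN, aN, l1N, l2N, MN.
  change (stN tau (S k)) with (stepN tau (stN tau k)).
  destruct (stN tau k) as [[x y] z]. simpl. auto.
Qed.

Lemma no_II_nat F (HF : proper_filter F) : ~ II_wins_nat F F.
Proof.
  intros [tau Htau].
  assert (Hgeq : forall m, F (geq m)).
  { intro m. destruct HF as [[_ [_ Hcof]] _]. apply Hcof. exists m. auto. }
  set (X1 := fun k => geq (MN tau k)).
  set (X2 := fun k => geq (S (aN tau k))).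
  assert (E1 : forall k, l1N tau k = prefix X1 k).
  { induction k; [reflexivity|]. rewrite prefix_S, (proj1 (proj2 (stN_eqs tau k))), IHk. reflexivity. }
  assert (E2 : forall k, l2N tau k = prefix X2 k).
  { induction k; [reflexivity|]. rewrite prefix_S, (proj2 (proj2 (stN_eqs tau k))), IHk. reflexivity. }
  destruct (Htau X1 (fun k => Hgeq _)) as [H1a H1b].
  destruct (Htau X2 (fun k => Hgeq _)) as [H2a H2b].
  assert (A : forall k, tau (prefix X1 (S k)) = aN tau k).
  { intro k. rewrite prefix_S, <- E1. reflexivity. }
  assert (B : forall k, tau (prefix X2 (S k)) = bN tau k).
  { intro k. rewrite prefix_S, <- E2. reflexivity. }
  destruct (F_inter_nonempty F HF _ _ H1b H2b) as [m [[i Hi] [j Hj]]].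
  rewrite A in Hi. rewrite B in Hj.
  apply (interleave_disj (MN tau) (aN tau) (bN tau)) with (i := i) (j := j).
  - intro k. pose proof (H1a k) as H. rewrite A in H. exact H.
  - intro k. pose proof (H2a k) as H. rewrite B in H. exact H.
  - intro k. apply (proj1 (stN_eqs tau k)).
  - congruence.
Qed.

Definition pickge (sigma : stratI_fin) (h : list (list nat)) (M : nat) : nat :=
  epsilon (inhabits 0) (fun x => M <= x /\ sigma h x).

Definition stepF (sigma : stratI_fin) (st : list (list nat) * list (list nat) * nat) :=
  match st with (h1, h2, M) =>
   (h1 ++ [[pickge sigma h1 M]], h2 ++ [[pickge sigma h2 (S (pickge sigma h1 M))]],
    S (pickge sigma h2 (S (pickge sigma h1 M)))) end.
Definition stF sigma k := Nat.iter k (stepF sigma) ([], [], 0).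
Definition MF sigma k := snd (stF sigma k).
Definition h1F sigma k := fst (fst (stF sigma k)).
Definition h2F sigma k := snd (fst (stF sigma k)).
Definition aF sigma k := pickge sigma (h1F sigma k) (MF sigma k).
Definition bF sigma k := pickge sigma (h2F sigma k) (S (aF sigma k)).

Lemma stF_eqs sigma k :
  MF sigma (S k) = S (bF sigma k) /\
  h1F sigma (S k) = h1F sigma k ++ [[aF sigma k]] /\
  h2F sigma (S k) = h2F sigma k ++ [[bF sigma k]].
Proof.
  unfold MF, h1F, h2F, bF, aF, h1F, h2F, MF.
  change (stF sigma (S k)) with (stepF sigma (stF sigma k)).
  destruct (stF sigma k) as [[x y] z]. simpl. auto.
Qed.

Lemma no_I_fin F (HF : proper_filter F) : ~ I_wins_fin (Fplus F) (Fcompl F).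
Proof.
  intros [sigma [Hsig Hwin]].
  assert (Hpk : forall h M, M <= pickge sigma h M /\ sigma h (pickge sigma h M)).
  { intros h M. unfold pickge. apply epsilon_spec. apply (Fplus_unbounded F HF). apply Hsig. }
  set (s1 := fun k => [aF sigma k]).
  set (s2 := fun k => [bF sigma k]).
  assert (E1 : forall k, h1F sigma k = prefix s1 k).
  { induction k; [reflexivity|]. rewrite prefix_S, (proj1 (proj2 (stF_eqs sigma k))), IHk. reflexivity. }
  assert (E2 : forall k, h2F sigma k = prefix s2 k).
  { induction k; [reflexivity|]. rewrite prefix_S, (proj2 (proj2 (stF_eqs sigma k))), IHk. reflexivity. }
  assert (U1 : F (fun m => exists k, In m (s1 k))).
  { apply NNPP. apply Hwin. intro k. split; [discriminate|].
    intros x [<-|[]]. rewrite <- E1. apply Hpk. }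
  assert (U2 : F (fun m => exists k, In m (s2 k))).
  { apply NNPP. apply Hwin. intro k. split; [discriminate|].
    intros x [<-|[]]. rewrite <- E2. apply Hpk. }
  destruct (F_inter_nonempty F HF _ _ U1 U2) as [m [[i Hi] [j Hj]]].
  destruct Hi as [Hi|[]]. destruct Hj as [Hj|[]].
  apply (interleave_disj (MF sigma) (aF sigma) (bF sigma)) with (i := i) (j := j).
  - intro k. apply Hpk.
  - intro k. apply Hpk.
  - intro k. apply (proj1 (stF_eqs sigma k)).
  - congruence.
Qed.

Definition Bset F (tau : stratII_fin) (p : list setN) : setN :=
  fun x => exists Y, Fplus F Y /\ In x (tau (p ++ [Y])).
Definition chooseY F tau p x : setN :=
  epsilon (inhabits (fun _ => True))
    (fun Y => Fplus F Y /\ (Bset F tau p x -> In x (tau (p ++ [Y])))).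
Definition posF F tau (h : list nat) : list setN :=
  fold_left (fun p x => p ++ [chooseY F tau p x]) h [].

Lemma chooseY_spec F (HF : proper_filter F) tau p x :
  Fplus F (chooseY F tau p x) /\ (Bset F tau p x -> In x (tau (p ++ [chooseY F tau p x]))).
Proof.
  unfold chooseY. apply epsilon_spec.
  destruct (classic (Bset F tau p x)) as [[Y [HY Hin]]|Hn].
  - exists Y. split; auto.
  - exists (fun _ => True). split; [apply Fplus_full; auto| intro; contradiction].
Qed.

Lemma posF_app F tau h x : posF F tau (h ++ [x]) = posF F tau h ++ [chooseY F tau (posF F tau h) x].
Proof. unfold posF. rewrite fold_left_app. reflexivity. Qed.

Lemma posF_Forall F (HF : proper_filter F) tau h : Forall (Fplus F) (posF F tau h).
Proof.
  induction h as [|x h IH] using rev_ind; [constructor|].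
  rewrite posF_app. apply Forall_app. split; auto.
  constructor; [apply chooseY_spec; auto | constructor].
Qed.

Lemma tau_legal F (HF : proper_filter F) (tau : stratII_fin)
  (Htau : forall Xs : nat -> setN, (forall k, Fplus F (Xs k)) ->
      (forall k, tau (prefix Xs (S k)) <> [] /\
                 forall x, In x (tau (prefix Xs (S k))) -> Xs k x) /\
      Fcompl F (fun m => exists k, In m (tau (prefix Xs (S k)))))
  p Y : Forall (Fplus F) p -> Fplus F Y ->
  tau (p ++ [Y]) <> [] /\ forall x, In x (tau (p ++ [Y])) -> Y x.
Proof.
  intros Hp HY.
  set (Xs := fun k => nth k (p ++ [Y]) (fun _ : nat => True)).
  assert (HXs : forall k, Fplus F (Xs k)).
  { intro k. unfold Xs. destruct (nth_in_or_default k (p ++ [Y]) (fun _ => True)) as [Hi|Hd].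
    - apply in_app_or in Hi. destruct Hi as [Hi|[<-|[]]]; auto.
      rewrite Forall_forall in Hp. auto.
    - rewrite Hd. apply Fplus_full; auto. }
  destruct (Htau Xs HXs) as [Hm _].
  destruct (Hm (length p)) as [H1 H2].
  assert (E : prefix Xs (S (length p)) = p ++ [Y]).
  { unfold Xs. replace (S (length p)) with (length (p ++ [Y])) by (rewrite length_app; simpl; lia).
    apply prefix_nth. }
  assert (EY : Xs (length p) = Y) by (unfold Xs; apply nth_middle).
  rewrite E, EY in *. auto.
Qed.

Lemma II_fin_to_I_nat F (HF : proper_filter F) :
  II_wins_fin (Fplus F) (Fcompl F) -> I_wins_nat F F.
Proof.
  intros [tau Htau].
  pose proof HF as [[_ [Hsup _]] _].
  assert (HB : forall p, Forall (Fplus F) p -> F (Bset F tau p)).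
  { intros p Hp. apply NNPP. intro Hn.
    set (Y0 := complN (Bset F tau p)).
    assert (HY0 : Fplus F Y0).
    { unfold Fplus. intro H. apply Hn. eapply Hsup; [exact H|].
      intros n Hn'. unfold Y0, complN in Hn'. apply NNPP. exact Hn'. }
    destruct (tau_legal F HF tau Htau p Y0 Hp HY0) as [H1 H2].
    destruct (tau (p ++ [Y0])) as [|x l] eqn:Et; [contradiction|].
    apply (H2 x); [left; reflexivity|]. exists Y0. split; auto. rewrite Et. left; reflexivity. }
  exists (fun h => Bset F tau (posF F tau h)). split.
  - intro h. apply HB. apply posF_Forall; auto.
  - intros n Hn.
    set (Ys := fun k => chooseY F tau (posF F tau (prefix n k)) (n k)).
    assert (E : forall k, posF F tau (prefix n k) = prefix Ys k).
    { induction k; [reflexivity|]. rewrite !prefix_S, posF_app, <- IHk. reflexivity. }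
    destruct (Htau Ys (fun k => proj1 (chooseY_spec F HF tau _ _))) as [_ Hunion].
    intro H. apply Hunion. eapply Hsup; [exact H|].
    intros m [k <-]. exists k. rewrite prefix_S, <- E.
    exact (proj2 (chooseY_spec F HF tau (posF F tau (prefix n k)) (n k)) (Hn k)).
Qed.

Definition pk (Y S : setN) : nat := epsilon (inhabits 0) (fun x => Y x /\ S x).
Definition gF (sigma : stratI_nat) (l : list setN) : list nat :=
  fold_left (fun acc Y => acc ++ [pk Y (sigma acc)]) l [].
Definition tauF sigma (l : list setN) : list nat := [last (gF sigma l) 0].

Lemma gF_app sigma l Y : gF sigma (l ++ [Y]) = gF sigma l ++ [pk Y (sigma (gF sigma l))].
Proof. unfold gF. rewrite fold_left_app. reflexivity. Qed.

Lemma I_nat_to_II_fin F (HF : proper_filter F) :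
  I_wins_nat F F -> II_wins_fin (Fplus F) (Fcompl F).
Proof.
  intros [sigma [Hsig Hwin]].
  pose proof HF as [[_ [Hsup _]] _].
  exists (tauF sigma). intros Xs HXs.
  set (n := fun k => pk (Xs k) (sigma (gF sigma (prefix Xs k)))).
  assert (G : forall k, gF sigma (prefix Xs k) = prefix n k).
  { induction k; [reflexivity|]. rewrite !prefix_S, gF_app, <- IHk. reflexivity. }
  assert (Ht : forall k, tauF sigma (prefix Xs (S k)) = [n k]).
  { intro k. unfold tauF. rewrite prefix_S, gF_app, last_last. reflexivity. }
  assert (Hn : forall k, Xs k (n k) /\ sigma (prefix n k) (n k)).
  { intro k. rewrite <- G. unfold n, pk. apply epsilon_spec.
    apply (Fplus_meets F HF); auto. }
  split.
  - intro k. rewrite Ht. split; [discriminate|]. intros x [<-|[]]. apply Hn.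
  - intro H. apply (Hwin n (fun k => proj2 (Hn k))). eapply Hsup; [exact H|].
    intros m [k Hk]. rewrite Ht in Hk. destruct Hk as [<-|[]]. exists k; reflexivity.
Qed.

Lemma I_nat_iff_not_Ramsey F (HF : proper_filter F) : I_wins_nat F F <-> ~ Ramsey F.
Proof.
  split.
  - intros [sigma [Hsig Hwin]] HR.
    set (T := fun s : list nat => forall k, k < length s -> sigma (firstn k s) (nth k s 0)).
    assert (HT : is_F_tree F T).
    { split; [split|].
      - intros k Hk. simpl in Hk. lia.
      - intros s t H k Hk. specialize (H k). rewrite length_app, firstn_app, app_nth1 in H by lia.
        replace (k - length s) with 0 in H by lia. simpl in H. rewrite app_nil_r in H.
        apply H. lia.
      - intros s Ts. exists (sigma s). split; auto. intros n Hn k Hk.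
        rewrite length_app in Hk. simpl in Hk.
        destruct (Nat.lt_ge_cases k (length s)) as [Hl|Hl].
        + rewrite firstn_app, app_nth1 by lia.
          replace (k - length s) with 0 by lia. simpl. rewrite app_nil_r. auto.
        + replace k with (length s) by lia. rewrite firstn_snoc, nth_middle. auto. }
    destruct (HR T HT) as [b [Hb Hin]].
    apply (Hwin b); auto. intro k. specialize (Hb (S k) k).
    rewrite prefix_length, prefix_S in Hb.
    pose proof (firstn_snoc (prefix b k) (b k)) as E1. rewrite prefix_length in E1.
    pose proof (nth_middle (prefix b k) [] (b k) 0) as E2. rewrite prefix_length in E2.
    rewrite E1, E2 in Hb. apply Hb. lia.
  - intros HnR. unfold Ramsey in HnR. apply not_all_ex_not in HnR. destruct HnR as [T HT].
    apply imply_to_and in HT. destruct HT as [[[HT0 HTs] HTX] Hnob].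
    set (sigma := fun h => epsilon (inhabits (fun _ : nat => True))
        (fun X => F X /\ (T h -> forall n, X n -> T (h ++ [n])))).
    assert (Hs : forall h, F (sigma h) /\ (T h -> forall n, sigma h n -> T (h ++ [n]))).
    { intro h. unfold sigma. apply epsilon_spec. destruct (classic (T h)) as [Th|Th].
      - destruct (HTX h Th) as [X [HX HXn]]. exists X. auto.
      - exists (fun _ => True). split; [apply F_full; auto| contradiction]. }
    exists sigma. split; [intro h; apply Hs|].
    intros n Hn HFr. apply Hnob. exists n. split; [|exact HFr].
    intro k. induction k; [exact HT0|]. rewrite prefix_S. apply (proj2 (Hs _)); auto.
Qed.

Theorem theorem2p21 (F : family) (HF : proper_filter F) :
  (I_wins_fin (Fplus F) (Fcompl F) <-> II_wins_nat F F) /\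
  (II_wins_fin (Fplus F) (Fcompl F) <-> I_wins_nat F F) /\
  ~ I_wins_fin (Fplus F) (Fcompl F) /\
  (II_wins_fin (Fplus F) (Fcompl F) <-> ~ Ramsey F).
Proof.
  assert (D : II_wins_fin (Fplus F) (Fcompl F) <-> I_wins_nat F F).
  { split; [apply II_fin_to_I_nat | apply I_nat_to_II_fin]; auto. }
  split; [|split; [exact D|split]].
  - split; intro H; exfalso; [apply (no_I_fin F HF) | apply (no_II_nat F HF)]; exact H.
  - apply no_I_fin; auto.
  - rewrite D. apply I_nat_iff_not_Ramsey; auto.
Qed.
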